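(* For all well-typed terms $\Gamma\vdash t:A$ and $\Gamma\vdash u:A$ of $\lambda^{S}$: $\Gamma\vdash t\equiv u:A$ holds in $\lambda^{S}$ if and only if $[\![t]\!]=[\![u]\!]:[\![\Gamma]\!]\to[\![A]\!]$ in every categorical model of $\lambda^{S}$ (i.e. every cartesian closed category equipped with a strong endofunctor, for every choice of interpretation of the base type).
   Context: Types: $A,B ::= \iota \mid 1 \mid A\times B \mid A\to B \mid \Diamond A$, where $\iota$ is a base type. A context $\Gamma$ is a list $x_1:A_1,\dots,x_n:A_n$ of distinct variables. Terms of the simply typed part: variables, $()$, $\langle t,u\rangle$, $\mathsf{fst}\,t$, $\mathsf{snd}\,t$, $\lambda x.t$, $t\,u$, with the standard typing rules. Modal term formers: (letmap) if $\Gamma\vdash t:\Diamond A$ and $\Gamma,x:A\vdash u:B$ then $\Gamma\vdash \mathsf{letmap}\ x=t\ \mathsf{in}\ u:\Diamond B$; (ret) if $\Gamma\vdash t:A$ then $\Gamma\vdash\mathsf{ret}\,t:\Diamond A$; (let) if $\Gamma\vdash t:\Diamond A$ and $\Gamma,x:A\vdash u:\Diamond B$ then $\Gamma\vdash\mathsf{let}\ x=t\ \mathsf{in}\ u:\Diamond B$. The calculus $\lambda^{S}$ has only letmap; $\lambda^{SR}$ has letmap and ret; $\lambda^{SJ}$ has letmap and let; $\lambda^{ML}$ (Moggi's monadic metalanguage) has ret and let. The equational theory $\Gamma\vdash t\equiv u:A$ of each calculus is the least congruence on well-typed terms (equivalence relation compatible with all term formers) containing the $\beta\eta$-laws of the simply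 typed lambda calculus ($t\equiv()$ for $t:1$; $t\equiv\langle\mathsf{fst}\,t,\mathsf{snd}\,t\rangle$; $\mathsf{fst}\langle t,u\rangle\equiv t$; $\mathsf{snd}\langle t,u\rangle\equiv u$; $t\equiv\lambda x.\,t\,x$ with $x$ fresh; $(\lambda x.t)\,u\equiv t[u/x]$) and the following modal laws, each included in the indicated calculi (terms are implicitly weakened into larger contexts where needed; $t[u/x]$ is capture-avoiding substitution): (letmap-$\eta$) $t\equiv\mathsf{letmap}\ x=t\ \mathsf{in}\ x$ [$\lambda^{S},\lambda^{SR},\lambda^{SJ}$]; (letmap-$\beta$) $\mathsf{letmap}\ y=(\mathsf{letmap}\ x=t\ \mathsf{in}\ u)\ \mathsf{in}\ u'\equiv\mathsf{letmap}\ x=t\ \mathsf{in}\ u'[u/y]$ [$\lambda^{S},\lambda^{SR},\lambda^{SJ}$]; (ret-letmap) $\mathsf{letmap}\ x=\mathsf{ret}\,t\ \mathsf{in}\ u\equiv\mathsf{ret}(u[t/x])$ [$\lambda^{SR}$]; (let-letmap) $\mathsf{let}\ y=(\mathsf{letmap}\ x=t\ \mathsf{in}\ u)\ \mathsf{in}\ u'\equiv\mathsf{let}\ x=t\ \mathsf{in}\ u'[u/y]$ [$\lambda^{SJ}$]; (com) $\mathsf{letmap}\ y=(\mathsf{let}\ x=t\ \mathsf{in}\ u)\ \mathsf{in}\ u'\equiv\mathsf{let}\ x=t\ \mathsf{in}\ (\mathsf{letmap}\ y=u\ \mathsf{in}\ u')$ [$\lambda^{SJ}$]; (ass) $\mathsf{let}\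 y=(\mathsf{let}\ x=t\ \mathsf{in}\ u)\ \mathsf{in}\ u'\equiv\mathsf{let}\ x=t\ \mathsf{in}\ (\mathsf{let}\ y=u\ \mathsf{in}\ u')$ [$\lambda^{SJ},\lambda^{ML}$]; (ML-$\beta$) $\mathsf{let}\ x=\mathsf{ret}\,t\ \mathsf{in}\ u\equiv u[t/x]$ [$\lambda^{ML}$]; (ML-$\eta$) $t\equiv\mathsf{let}\ x=t\ \mathsf{in}\ \mathsf{ret}\,x$ [$\lambda^{ML}$]. Categorical models: a categorical model of $\lambda^{S}$ is a cartesian closed category $\mathcal C$ with an endofunctor $D$ and a strength $\mathrm{st}_{X,Y}:X\times DY\to D(X\times Y)$ natural in $X,Y$ satisfying $D\pi_2\circ\mathrm{st}_{1,X}=\pi_2$ and $D\alpha\circ\mathrm{st}_{X\times Y,Z}=\mathrm{st}_{X,Y\times Z}\circ(\mathrm{id}\times\mathrm{st}_{Y,Z})\circ\alpha$ ($\alpha$ the associator). Given an object interpreting $\iota$, types are interpreted by $[\![1]\!]$ terminal, products, exponentials, $[\![\Diamond A]\!]=D[\![A]\!]$; contexts by iterated products starting from the terminal object; simply typed terms in the standard cartesian closed way, and $[\![\mathsf{letmap}\ x=t\ \mathsf{in}\ u]\!]=D[\![u]\!]\circ\mathrm{st}\circ\langle\mathrm{id},[\![t]\!]\rangle$. *)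

(* Defs.v *)
From Stdlib Require Import List.
Import ListNotations.


Inductive ty : Type :=
| Base : ty
| Unit : ty
| Prod : ty -> ty -> ty
| Arr  : ty -> ty -> ty
| Dia  : ty -> ty.

(* A context x1:A1,...,xn:An is the list [An; ...; A1] (head = last var). *)
Definition ctx := list ty.

Inductive var : ctx -> ty -> Type :=
| Vz : forall G A, var (A :: G) A
| Vs : forall G A B, var G A -> var (B :: G) A.
Arguments Vz {G A}.
Arguments Vs {G A B} v.

Inductive tm : ctx -> ty -> Type :=
| tvar : forall G A, var G A -> tm G A
| tunit : forall G, tm G Unit
| tpair : forall G A B, tm G A -> tm G B -> tm G (Prod A B)
| tfst : forall G A B, tm G (Prod A B) -> tm G A
| tsnd : forall G A B, tm G (Prod A B) -> tm G B
| tlam : forall G A B, tm (A :: G) B -> tm G (Arr A B)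
| tapp : forall G A B, tm G (Arr A B) -> tm G A -> tm G B
| tletmap : forall G A B, tm G (Dia A) -> tm (A :: G) B -> tm G (Dia B).
Arguments tvar {G A} v.
Arguments tunit {G}.
Arguments tpair {G A B} t u.
Arguments tfst {G A B} t.
Arguments tsnd {G A B} t.
Arguments tlam {G A B} t.
Arguments tapp {G A B} t u.
Arguments tletmap {G A B} t u.

Definition ren (G D : ctx) := forall A, var G A -> var D A.
Definition sub (G D : ctx) := forall A, var G A -> tm D A.

Definition lift_ren {G D B} (r : ren G D) : ren (B :: G) (B :: D) :=
  fun A v =>
    match v in var L A0 return
      (match L with nil => unit | B0 :: G0 => ren G0 D -> var (B0 :: D) A0 end) with
    | Vz => fun _ => Vz
    | Vs v' => fun r => Vs (r _ v')
    end r.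

Fixpoint rename {G D A} (r : ren G D) (t : tm G A) {struct t} : tm D A :=
  match t in tm G0 A0 return ren G0 D -> tm D A0 with
  | tvar v => fun r => tvar (r _ v)
  | tunit => fun _ => tunit
  | tpair t u => fun r => tpair (rename r t) (rename r u)
  | tfst t => fun r => tfst (rename r t)
  | tsnd t => fun r => tsnd (rename r t)
  | tlam t => fun r => tlam (rename (lift_ren r) t)
  | tapp t u => fun r => tapp (rename r t) (rename r u)
  | tletmap t u => fun r => tletmap (rename r t) (rename (lift_ren r) u)
  end r.

Definition wk {G A B} (t : tm G A) : tm (B :: G) A :=
  rename (fun _ v => Vs v) t.

Definition scons {G D B} (u : tm D B) (s : sub G D) : sub (B :: G) D :=
  fun A v =>
    match v in var L A0 return
      (match L with nil => unit | B0 :: G0 => tm D B0 -> sub G0 D -> tm D A0 end) with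
    | Vz => fun u _ => u
    | Vs v' => fun _ s => s _ v'
    end u s.

Definition ids {G} : sub G G := fun _ v => tvar v.

Definition lift_sub {G D B} (s : sub G D) : sub (B :: G) (B :: D) :=
  scons (tvar Vz) (fun _ v => wk (s _ v)).

Fixpoint subst {G D A} (s : sub G D) (t : tm G A) {struct t} : tm D A :=
  match t in tm G0 A0 return sub G0 D -> tm D A0 with
  | tvar v => fun s => s _ v
  | tunit => fun _ => tunit
  | tpair t u => fun s => tpair (subst s t) (subst s u)
  | tfst t => fun s => tfst (subst s t)
  | tsnd t => fun s => tsnd (subst s t)
  | tlam t => fun s => tlam (subst (lift_sub s) t)
  | tapp t u => fun s => tapp (subst s t) (subst s u)
  | tletmap t u => fun s => tletmap (subst s t) (subst (lift_sub s) u)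
  end s.

Definition subst1 {G A B} (t : tm (A :: G) B) (u : tm G A) : tm G B :=
  subst (scons u ids) t.

Inductive eqtm : forall {G : ctx} {A : ty}, tm G A -> tm G A -> Prop :=
| eq_rfl : forall G A (t : tm G A), eqtm t t
| eq_sym : forall G A (t u : tm G A), eqtm t u -> eqtm u t
| eq_trn : forall G A (t u v : tm G A), eqtm t u -> eqtm u v -> eqtm t v
| cg_pair : forall G A B (t t' : tm G A) (u u' : tm G B),
    eqtm t t' -> eqtm u u' -> eqtm (tpair t u) (tpair t' u')
| cg_fst : forall G A B (t t' : tm G (Prod A B)), eqtm t t' -> eqtm (tfst t) (tfst t')
| cg_snd : forall G A B (t t' : tm G (Prod A B)), eqtm t t' -> eqtm (tsnd t) (tsnd t')
| cg_lam : forall G A B (t t' : tm (A :: G) B), eqtm t t' -> eqtm (tlam t) (tlam t')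
| cg_app : forall G A B (t t' : tm G (Arr A B)) (u u' : tm G A),
    eqtm t t' -> eqtm u u' -> eqtm (tapp t u) (tapp t' u')
| cg_letmap : forall G A B (t t' : tm G (Dia A)) (u u' : tm (A :: G) B),
    eqtm t t' -> eqtm u u' -> eqtm (tletmap t u) (tletmap t' u')
| ax_unit_eta : forall G (t : tm G Unit), eqtm t tunit
| ax_prod_eta : forall G A B (t : tm G (Prod A B)), eqtm t (tpair (tfst t) (tsnd t))
| ax_fst_beta : forall G A B (t : tm G A) (u : tm G B), eqtm (tfst (tpair t u)) t
| ax_snd_beta : forall G A B (t : tm G A) (u : tm G B), eqtm (tsnd (tpair t u)) u
| ax_fun_eta : forall G A B (t : tm G (Arr A B)), eqtm t (tlam (tapp (wk t) (tvar Vz)))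
| ax_fun_beta : forall G A B (t : tm (A :: G) B) (u : tm G A),
    eqtm (tapp (tlam t) u) (subst1 t u)
| ax_letmap_eta : forall G A (t : tm G (Dia A)), eqtm t (tletmap t (tvar Vz))
| ax_letmap_beta : forall G A B C (t : tm G (Dia A)) (u : tm (A :: G) B) (u' : tm (B :: G) C),
    eqtm (tletmap (tletmap t u) u')
         (tletmap t (subst (scons u (fun _ v => tvar (Vs v))) u')).


Record CCC : Type := {
  obj : Type;
  hom : obj -> obj -> Type;
  cid : forall X, hom X X;
  comp : forall X Y Z, hom Y Z -> hom X Y -> hom X Z;
  comp_assoc : forall X Y Z W (f : hom X Y) (g : hom Y Z) (h : hom Z W),
      comp X Z W h (comp X Y Z g f) = comp X Y W (comp Y Z W h g) f;
  comp_id_l : forall X Y (f : hom X Y), comp X Y Y (cid Y) f = f;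
  comp_id_r : forall X Y (f : hom X Y), comp X X Y f (cid X) = f;
  one : obj;
  bang : forall X, hom X one;
  bang_uniq : forall X (f : hom X one), f = bang X;
  prod : obj -> obj -> obj;
  pr1 : forall X Y, hom (prod X Y) X;
  pr2 : forall X Y, hom (prod X Y) Y;
  pairing : forall Z X Y, hom Z X -> hom Z Y -> hom Z (prod X Y);
  pr1_pairing : forall Z X Y (f : hom Z X) (g : hom Z Y),
      comp Z (prod X Y) X (pr1 X Y) (pairing Z X Y f g) = f;
  pr2_pairing : forall Z X Y (f : hom Z X) (g : hom Z Y),
      comp Z (prod X Y) Y (pr2 X Y) (pairing Z X Y f g) = g;
  pairing_uniq : forall Z X Y (h : hom Z (prod X Y)),
      pairing Z X Y (comp Z (prod X Y) X (pr1 X Y) h) (comp Z (prod X Y) Y (pr2 X Y) h) = h;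
  exp : obj -> obj -> obj;
  ev : forall X Y, hom (prod (exp X Y) X) Y;
  curry : forall Z X Y, hom (prod Z X) Y -> hom Z (exp X Y);
  ev_curry : forall Z X Y (f : hom (prod Z X) Y),
      comp (prod Z X) (prod (exp X Y) X) Y (ev X Y)
        (pairing (prod Z X) (exp X Y) X
           (comp (prod Z X) Z (exp X Y) (curry Z X Y f) (pr1 Z X)) (pr2 Z X)) = f;
  curry_uniq : forall Z X Y (h : hom Z (exp X Y)),
      curry Z X Y (comp (prod Z X) (prod (exp X Y) X) Y (ev X Y)
        (pairing (prod Z X) (exp X Y) X
           (comp (prod Z X) Z (exp X Y) h (pr1 Z X)) (pr2 Z X))) = h
}.
Arguments cid {c} X.
Arguments comp {c X Y Z} g f.
Arguments one {c}.
Arguments bang {c} X.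
Arguments prod {c} X Y.
Arguments pr1 {c X Y}.
Arguments pr2 {c X Y}.
Arguments pairing {c Z X Y} f g.
Arguments exp {c} X Y.
Arguments ev {c X Y}.
Arguments curry {c Z X Y} f.

Definition pmap {C : CCC} {X X' Y Y' : obj C} (f : hom C X X') (g : hom C Y Y')
  : hom C (prod X Y) (prod X' Y') :=
  pairing (comp f pr1) (comp g pr2).

Definition assoc {C : CCC} (X Y Z : obj C)
  : hom C (prod (prod X Y) Z) (prod X (prod Y Z)) :=
  pairing (comp pr1 pr1) (pairing (comp pr2 pr1) pr2).

Record SModel (C : CCC) : Type := {
  Dob : obj C -> obj C;
  Dmap : forall X Y, hom C X Y -> hom C (Dob X) (Dob Y);
  Dmap_id : forall X, Dmap X X (cid X) = cid (Dob X);
  Dmap_comp : forall X Y Z (f : hom C X Y) (g : hom C Y Z),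
      Dmap X Z (comp g f) = comp (Dmap Y Z g) (Dmap X Y f);
  st : forall X Y, hom C (prod X (Dob Y)) (Dob (prod X Y));
  st_nat : forall X X' Y Y' (f : hom C X X') (g : hom C Y Y'),
      comp (st X' Y') (pmap f (Dmap Y Y' g)) = comp (Dmap _ _ (pmap f g)) (st X Y);
  st_unit : forall X, comp (Dmap (prod one X) X pr2) (st one X) = pr2;
  st_assoc : forall X Y Z,
      comp (Dmap _ _ (assoc X Y Z)) (st (prod X Y) Z)
      = comp (st X (prod Y Z)) (comp (pmap (cid X) (st Y Z)) (assoc X Y (Dob Z)))
}.
Arguments Dob {C} s X.
Arguments Dmap {C} s {X Y} _.
Arguments st {C} s X Y.

Fixpoint sem_ty {C : CCC} (M : SModel C) (b : obj C) (A : ty) : obj C :=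
  match A with
  | Base => b
  | Unit => one
  | Prod A B => prod (sem_ty M b A) (sem_ty M b B)
  | Arr A B => exp (sem_ty M b A) (sem_ty M b B)
  | Dia A => Dob M (sem_ty M b A)
  end.

Fixpoint sem_ctx {C : CCC} (M : SModel C) (b : obj C) (G : ctx) : obj C :=
  match G with
  | nil => one
  | A :: G => prod (sem_ctx M b G) (sem_ty M b A)
  end.

Fixpoint sem_var {C : CCC} (M : SModel C) (b : obj C) {G A} (v : var G A)
  : hom C (sem_ctx M b G) (sem_ty M b A) :=
  match v in var G0 A0 return hom C (sem_ctx M b G0) (sem_ty M b A0) with
  | Vz => pr2
  | Vs v' => comp (sem_var M b v') pr1
  end.

Fixpoint sem {C : CCC} (M : SModel C) (b : obj C) {G A} (t : tm G A)
  : hom C (sem_ctx M b G) (sem_ty M b A) :=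
  match t in tm G0 A0 return hom C (sem_ctx M b G0) (sem_ty M b A0) with
  | tvar v => sem_var M b v
  | tunit => bang _
  | tpair t u => pairing (sem M b t) (sem M b u)
  | tfst t => comp pr1 (sem M b t)
  | tsnd t => comp pr2 (sem M b t)
  | tlam t => curry (sem M b t)
  | tapp t u => comp ev (pairing (sem M b t) (sem M b u))
  | tletmap t u =>
      comp (Dmap M (sem M b u)) (comp (st M _ _) (pairing (cid _) (sem M b t)))
  end.

(* Main.v *)
Require Import Defs.
From Stdlib Require Import List FunctionalExtensionality.
Import ListNotations.

Lemma var_cons_rect G B (P : forall A, var (B::G) A -> Type) :
  P B Vz -> (forall A v, P A (Vs v)) -> forall A v, P A v.
Proof.
  intros H0 H1 A v.
  refine (match v in var L A0 return
            (match L return var L A0 -> Type with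
             | nil => fun _ => unit
             | B'::G' => fun v => forall P' : (forall A, var (B'::G') A -> Type),
                  P' B' Vz -> (forall A v, P' A (Vs v)) -> P' A0 v end v) with
          | Vz => _ | Vs v' => _ end P H0 H1); simpl; auto.
Qed.

Lemma var_nil_empty A (v : var nil A) : False.
Proof.
  refine (match v in var L A0 return (match L with nil => False | _ => True end) with
          | Vz => I | Vs _ => I end).
Qed.

Ltac fext := let A := fresh "A" in let v := fresh "v" in
  extensionality A; extensionality v.

Lemma rename_rename G A (t : tm G A) : forall D E (r1 : ren G D) (r2 : ren D E),
  rename r2 (rename r1 t) = rename (fun A v => r2 A (r1 A v)) t.
Proof.
  induction t; intros; simpl; try rewrite ?IHt, ?IHt1, ?IHt2; auto.
  - f_equal. f_equal. fext. revert A0 v. apply var_cons_rect; reflexivity.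
  - f_equal. f_equal. fext. revert A0 v. apply var_cons_rect; reflexivity.
Qed.

Lemma rename_subst G A (t : tm G A) : forall D E (r : ren G D) (s : sub D E),
  subst s (rename r t) = subst (fun A v => s A (r A v)) t.
Proof.
  induction t; intros; simpl; try rewrite ?IHt, ?IHt1, ?IHt2; auto.
  - f_equal. f_equal. fext. revert A0 v. apply var_cons_rect; reflexivity.
  - f_equal. f_equal. fext. revert A0 v. apply var_cons_rect; reflexivity.
Qed.

Lemma subst_rename G A (t : tm G A) : forall D E (s : sub G D) (r : ren D E),
  rename r (subst s t) = subst (fun A v => rename r (s A v)) t.
Proof.
  induction t; intros; simpl; try rewrite ?IHt, ?IHt1, ?IHt2; auto.
  - f_equal. f_equal. fext. revert A0 v. apply var_cons_rect; try reflexivity.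
    intros. simpl. unfold lift_sub, wk; simpl. rewrite !rename_rename. reflexivity.
  - f_equal. f_equal. fext. revert A0 v. apply var_cons_rect; try reflexivity.
    intros. simpl. unfold lift_sub, wk; simpl. rewrite !rename_rename. reflexivity.
Qed.

Lemma subst_subst G A (t : tm G A) : forall D E (s1 : sub G D) (s2 : sub D E),
  subst s2 (subst s1 t) = subst (fun A v => subst s2 (s1 A v)) t.
Proof.
  induction t; intros; simpl; try rewrite ?IHt, ?IHt1, ?IHt2; auto.
  - f_equal. f_equal. fext. revert A0 v. apply var_cons_rect; try reflexivity.
    intros. simpl. unfold lift_sub, wk; simpl. rewrite rename_subst, subst_rename. reflexivity.
  - f_equal. f_equal. fext. revert A0 v. apply var_cons_rect; try reflexivity.
    intros. simpl. unfold lift_sub, wk; simpl. rewrite rename_subst, subst_rename. reflexivity.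
Qed.

Lemma subst_ids G A (t : tm G A) : subst ids t = t.
Proof.
  induction t; simpl; try rewrite ?IHt, ?IHt1, ?IHt2; auto.
  - f_equal. rewrite <- IHt at 2. f_equal. fext. revert A0 v. apply var_cons_rect; reflexivity.
  - f_equal. rewrite <- IHt2 at 2. f_equal. fext. revert A0 v. apply var_cons_rect; reflexivity.
Qed.

Lemma rename_as_subst G A (t : tm G A) : forall D (r : ren G D),
  rename r t = subst (fun A v => tvar (r A v)) t.
Proof.
  induction t; intros; simpl; try rewrite ?IHt, ?IHt1, ?IHt2; auto.
  - f_equal. f_equal. fext. revert A0 v. apply var_cons_rect; reflexivity.
  - f_equal. f_equal. fext. revert A0 v. apply var_cons_rect; reflexivity.
Qed.
Lemma wk_subst G D B A (s : sub G D) (t : tm G A) :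
  subst (@lift_sub G D B s) (wk t) = wk (subst s t).
Proof. unfold wk. rewrite rename_subst, subst_rename. reflexivity. Qed.

Lemma eqtm_subst G A (t u : tm G A) (H : eqtm t u) :
  forall D (s : sub G D), eqtm (subst s t) (subst s u).
Proof.
  induction H; intros; simpl.
  - apply eq_rfl.
  - apply eq_sym; auto.
  - eapply eq_trn; eauto.
  - apply cg_pair; auto.
  - apply cg_fst; auto.
  - apply cg_snd; auto.
  - apply cg_lam; auto.
  - apply cg_app; auto.
  - apply cg_letmap; auto.
  - apply ax_unit_eta.
  - apply ax_prod_eta.
  - apply ax_fst_beta.
  - apply ax_snd_beta.
  - rewrite wk_subst. apply ax_fun_eta.
  - unfold subst1. rewrite !subst_subst.
    replace (fun (A0 : ty) (v : var (A :: G) A0) => subst s (scons u ids A0 v))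
      with (fun (A0 : ty) (v : var (A :: G) A0) =>
              subst (scons (subst s u) ids) (lift_sub s A0 v)).
    + pose proof (ax_fun_beta _ _ _ (subst (lift_sub s) t) (subst s u)) as HH.
      unfold subst1 in HH; rewrite subst_subst in HH; exact HH.
    + fext. revert A0 v. apply var_cons_rect; try reflexivity.
      intros. simpl. unfold wk. rewrite rename_subst. simpl. apply subst_ids.
  - apply ax_letmap_eta.
  - rewrite !subst_subst.
    replace (fun (A0 : ty) (v : var (B :: G) A0) =>
      subst (lift_sub s) (scons u (fun (A1 : ty) (v0 : var G A1) => tvar (Vs v0)) A0 v))
     with (fun (A0 : ty) (v : var (B :: G) A0) =>
      subst (scons (subst (lift_sub s) u) (fun (A1 : ty) (v0 : var D A1) => tvar (Vs v0)))
        (lift_sub s A0 v)).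
    + pose proof (ax_letmap_beta _ _ _ _ (subst s t) (subst (lift_sub s) u) (subst (lift_sub s) u')) as HH.
      rewrite subst_subst in HH; exact HH.
    + fext. revert A0 v. apply var_cons_rect; try reflexivity.
      intros. simpl. unfold wk. rewrite rename_subst, rename_as_subst. reflexivity.
Qed.

Lemma eqtm_rename G A (t u : tm G A) D (r : ren G D) :
  eqtm t u -> eqtm (rename r t) (rename r u).
Proof. intros. rewrite !rename_as_subst. apply eqtm_subst; auto. Qed.

Lemma eqtm_subst_pw G A (t : tm G A) : forall D (s1 s2 : sub G D),
  (forall A v, eqtm (s1 A v) (s2 A v)) -> eqtm (subst s1 t) (subst s2 t).
Proof.
  induction t; intros; simpl.
  - auto.
  - apply eq_rfl.
  - apply cg_pair; auto.
  - apply cg_fst; auto.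
  - apply cg_snd; auto.
  - apply cg_lam; apply IHt. apply var_cons_rect.
    + apply eq_rfl.
    + intros. simpl. apply eqtm_rename; auto.
  - apply cg_app; auto.
  - apply cg_letmap; auto. apply IHt2. apply var_cons_rect.
    + apply eq_rfl.
    + intros. simpl. apply eqtm_rename; auto.
Qed.
Section CatLemmas.
Variable C : CCC.

Lemma cA X Y Z W (f : hom C X Y) (g : hom C Y Z) (h : hom C Z W) :
  comp (comp h g) f = comp h (comp g f).
Proof. symmetry; apply comp_assoc. Qed.

Lemma cidl X Y (f : hom C X Y) : comp (cid Y) f = f. Proof. apply comp_id_l. Qed.
Lemma cidr X Y (f : hom C X Y) : comp f (cid X) = f. Proof. apply comp_id_r. Qed.

Lemma p1p Z X Y (f : hom C Z X) (g : hom C Z Y) : comp pr1 (pairing f g) = f.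
Proof. apply pr1_pairing. Qed.
Lemma p2p Z X Y (f : hom C Z X) (g : hom C Z Y) : comp pr2 (pairing f g) = g.
Proof. apply pr2_pairing. Qed.
Lemma p1pc W Z X Y (f : hom C Z X) (g : hom C Z Y) (h : hom C W Z) :
  comp pr1 (comp (pairing f g) h) = comp f h.
Proof. rewrite <- cA, p1p. reflexivity. Qed.
Lemma p2pc W Z X Y (f : hom C Z X) (g : hom C Z Y) (h : hom C W Z) :
  comp pr2 (comp (pairing f g) h) = comp g h.
Proof. rewrite <- cA, p2p. reflexivity. Qed.

Lemma pairing_ext Z X Y (h : hom C Z (prod X Y)) f g :
  comp pr1 h = f -> comp pr2 h = g -> h = pairing f g.
Proof. intros <- <-. symmetry; apply pairing_uniq. Qed.

Lemma comp_pairing W Z X Y (f : hom C Z X) (g : hom C Z Y) (h : hom C W Z) :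
  comp (pairing f g) h = pairing (comp f h) (comp g h).
Proof. apply pairing_ext; rewrite <- cA; rewrite ?p1p, ?p2p; reflexivity. Qed.

Lemma pairing_pr X Y : pairing (@pr1 C X Y) pr2 = cid _.
Proof. symmetry. apply pairing_ext; apply cidr. Qed.

Lemma bang_eq X (f g : hom C X one) : f = g.
Proof. rewrite (bang_uniq _ _ f), (bang_uniq _ _ g). reflexivity. Qed.

Ltac cnorm := repeat (rewrite ?cA, ?cidl, ?cidr, ?p1p, ?p2p, ?p1pc, ?p2pc, ?comp_pairing).

Lemma curry_nat W Z X Y (f : hom C (prod Z X) Y) (h : hom C W Z) :
  comp (curry f) h = curry (comp f (pmap h (cid X))).
Proof.
  rewrite <- (curry_uniq _ _ _ _ (comp (curry f) h)). f_equal.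
  rewrite <- (ev_curry _ _ _ _ f) at 2. unfold pmap. cnorm. reflexivity.
Qed.

Lemma ev_beta Z X Y (f : hom C (prod Z X) Y) (a : hom C Z X) :
  comp ev (pairing (curry f) a) = comp f (pairing (cid _) a).
Proof.
  rewrite <- (ev_curry _ _ _ _ f) at 2. rewrite cA. f_equal.
  rewrite comp_pairing. rewrite cA, p1p, p2p, cidr. reflexivity.
Qed.
End CatLemmas.
Ltac cnorm := repeat (rewrite ?cA, ?cidl, ?cidr, ?p1p, ?p2p, ?p1pc, ?p2pc, ?comp_pairing).



Section ModelLemmas.
Variable C : CCC.
Variable M : SModel C.

Lemma Dmap_id' X : Dmap M (cid X) = cid _. Proof. apply Dmap_id. Qed.
Lemma Dmap_comp' X Y Z (f : hom C X Y) (g : hom C Y Z) :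
  Dmap M (comp g f) = comp (Dmap M g) (Dmap M f).
Proof. apply Dmap_comp. Qed.

Lemma st_pr2 X Y : comp (Dmap M (@pr2 C X Y)) (st M X Y) = pr2.
Proof.
  assert (E : (@pr2 C X Y) = comp pr2 (pmap (bang X) (cid Y))).
  { unfold pmap. rewrite p2p, cidl. reflexivity. }
  rewrite E at 1. rewrite Dmap_comp', cA, <- st_nat, Dmap_id', <- cA, st_unit.
  unfold pmap. rewrite p2p, cidl. reflexivity.
Qed.

Lemma letmap_nat G G' A B (u : hom C (prod G A) B) (t : hom C G (Dob M A))
  (r : hom C G' G) :
  comp (comp (Dmap M u) (comp (st M _ _) (pairing (cid _) t))) r
  = comp (Dmap M (comp u (pmap r (cid A)))) (comp (st M _ _) (pairing (cid _) (comp t r))).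
Proof.
  rewrite Dmap_comp'. cnorm. f_equal. rewrite <- cA, <- st_nat, Dmap_id'.
  cnorm. unfold pmap. cnorm. reflexivity.
Qed.
End ModelLemmas.
Fixpoint sem_sub {C : CCC} (M : SModel C) (b : obj C) {G D : ctx} {struct G}
  : sub G D -> hom C (sem_ctx M b D) (sem_ctx M b G) :=
  match G return sub G D -> hom C (sem_ctx M b D) (sem_ctx M b G) with
  | nil => fun _ => bang _
  | A :: G' => fun s => pairing (sem_sub M b (fun _ v => s _ (Vs v))) (sem M b (s _ Vz))
  end.

Section Sem.
Variables (C : CCC) (M : SModel C) (b : obj C).

Lemma sem_var_sub G A (v : var G A) : forall D (s : sub G D),
  sem M b (s A v) = comp (sem_var M b v) (sem_sub M b s).
Proof.
  induction v; intros; simpl.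
  - rewrite p2p. reflexivity.
  - rewrite cA, p1p. apply (IHv _ (fun _ w => s _ (Vs w))).
Qed.

Lemma sem_ren_weak G : forall D B (r : ren G D),
  sem_sub M b (D := B :: D) (fun _ v => tvar (Vs (r _ v)))
  = comp (sem_sub M b (fun _ v => tvar (r _ v))) pr1.
Proof.
  induction G; intros; simpl.
  - apply bang_eq.
  - rewrite comp_pairing. f_equal.
    apply (IHG _ _ (fun _ w => r _ (Vs w))).
Qed.

Lemma sem_ids G : sem_sub M b (G := G) (fun _ v => tvar v) = cid _.
Proof.
  induction G; simpl.
  - apply bang_eq.
  - rewrite (sem_ren_weak G G a (fun _ v => v)). rewrite IHG, cidl.
    apply pairing_pr.
Qed.

Lemma sem_wk_sub G B : sem_sub M b (G := G) (D := B :: G) (fun _ v => tvar (Vs v)) = pr1.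
Proof. rewrite (sem_ren_weak G G B (fun _ v => v)), sem_ids, cidl. reflexivity. Qed.

Lemma sem_rename G A (t : tm G A) : forall D (r : ren G D),
  sem M b (rename r t) = comp (sem M b t) (sem_sub M b (fun _ v => tvar (r _ v))).
Proof.
  induction t; intros; simpl.
  - apply (sem_var_sub _ _ v _ (fun _ w => tvar (r _ w))).
  - apply bang_eq.
  - rewrite IHt1, IHt2, comp_pairing. reflexivity.
  - rewrite IHt, cA. reflexivity.
  - rewrite IHt, cA. reflexivity.
  - rewrite IHt, curry_nat. f_equal. f_equal. simpl.
    rewrite sem_ren_weak. unfold pmap. rewrite cidl. reflexivity.
  - rewrite IHt1, IHt2, cA, comp_pairing. reflexivity.
  - rewrite IHt1, IHt2, letmap_nat. f_equal. f_equal. simpl.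
    rewrite sem_ren_weak. unfold pmap. rewrite cidl. reflexivity.
Qed.

Lemma sem_wk G A B (t : tm G A) : sem M b (wk (B := B) t) = comp (sem M b t) pr1.
Proof. unfold wk. rewrite sem_rename. rewrite sem_wk_sub. reflexivity. Qed.

Lemma sem_sub_wk G : forall D B (s : sub G D),
  sem_sub M b (D := B :: D) (fun _ v => wk (s _ v)) = comp (sem_sub M b s) pr1.
Proof.
  induction G; intros; simpl.
  - apply bang_eq.
  - rewrite comp_pairing, sem_wk. f_equal.
    apply (IHG _ _ (fun _ w => s _ (Vs w))).
Qed.

Lemma sem_lift_sub G D B (s : sub G D) :
  sem_sub M b (lift_sub (B := B) s) = pmap (sem_sub M b s) (cid _).
Proof.
  simpl. unfold pmap. rewrite cidl. f_equal. apply sem_sub_wk.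
Qed.

Lemma sem_subst G A (t : tm G A) : forall D (s : sub G D),
  sem M b (subst s t) = comp (sem M b t) (sem_sub M b s).
Proof.
  induction t; intros; simpl.
  - apply sem_var_sub.
  - apply bang_eq.
  - rewrite IHt1, IHt2, comp_pairing. reflexivity.
  - rewrite IHt, cA. reflexivity.
  - rewrite IHt, cA. reflexivity.
  - rewrite IHt, curry_nat, sem_lift_sub. reflexivity.
  - rewrite IHt1, IHt2, cA, comp_pairing. reflexivity.
  - rewrite IHt1, IHt2, letmap_nat, sem_lift_sub. reflexivity.
Qed.

Lemma st_beta G A B (t : hom C G (Dob M A)) (u : hom C (prod G A) B) :
  comp (st M G B) (pairing (cid G) (comp (Dmap M u) (comp (st M G A) (pairing (cid G) t))))
  = comp (Dmap M (pairing pr1 u)) (comp (st M G A) (pairing (cid G) t)).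
Proof.
  set (w := comp (st M G A) (pairing (cid G) t)).
  assert (E1 : pairing (cid G) (comp (Dmap M u) w) = comp (pmap (cid G) (Dmap M u)) (pairing (cid G) w)).
  { unfold pmap. cnorm. reflexivity. }
  rewrite E1, <- cA, st_nat.
  assert (E2 : pairing (cid G) w = comp (pmap (cid G) (st M G A))
      (comp (assoc G G (Dob M A)) (pairing (pairing (cid G) (cid G)) t))).
  { unfold pmap, assoc, w. cnorm. reflexivity. }
  assert (E4 : forall (P : hom C G (prod (prod G G) (Dob M A))),
    comp (st M G (prod G A)) (comp (pmap (cid G) (st M G A)) (comp (assoc G G (Dob M A)) P))
    = comp (Dmap M (assoc G G A)) (comp (st M (prod G G) A) P)).
  { intros. transitivity (comp (comp (st M G (prod G A)) (comp (pmap (cid G) (st M G A)) (assoc G G (Dob M A)))) P).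
    - rewrite !cA; reflexivity.
    - rewrite <- st_assoc, cA. reflexivity. }
  rewrite E2, cA, E4.
  assert (E3 : pairing (pairing (cid G) (cid G)) t =
     comp (pmap (pairing (cid G) (cid G)) (Dmap M (cid A))) (pairing (cid G) t)).
  { unfold pmap. rewrite Dmap_id'. cnorm. reflexivity. }
  rewrite E3. rewrite <- (cA _ _ _ _ _ (pairing (cid G) t) (pmap (pairing (cid G) (cid G)) (Dmap M (cid A)))).
  rewrite st_nat. unfold w. cnorm. rewrite <- !cA, <- !Dmap_comp'.
  f_equal. f_equal. unfold pmap, assoc. cnorm. rewrite ?pairing_pr, ?cidr. reflexivity.
Qed.

Theorem soundness G A (t u : tm G A) : eqtm t u -> sem M b t = sem M b u.
Proof.
  induction 1; simpl; try congruence.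
  - apply bang_eq.
  - symmetry. apply pairing_uniq.
  - apply p1p.
  - apply p2p.
  - rewrite sem_wk. symmetry. apply curry_uniq.
  - rewrite ev_beta. unfold subst1. rewrite sem_subst. simpl. f_equal. f_equal.
    symmetry. exact (sem_ids G).
  - rewrite <- cA, st_pr2, p2p. reflexivity.
  - rewrite sem_subst. simpl. rewrite sem_wk_sub. rewrite Dmap_comp', cA.
    f_equal. apply st_beta.
Qed.
End Sem.
From Stdlib Require Import Setoid Morphisms ProofIrrelevance PropExtensionality IndefiniteDescription.

#[export] Instance eqtm_Equiv G A : Equivalence (@eqtm G A).
Proof. split; intro; intros; [apply eq_rfl | apply eq_sym; auto | eapply eq_trn; eauto]. Qed.

#[export] Instance tpair_Proper G A B : Proper (eqtm ==> eqtm ==> eqtm) (@tpair G A B).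
Proof. intros ? ? ? ? ? ?; apply cg_pair; auto. Qed.
#[export] Instance tfst_Proper G A B : Proper (eqtm ==> eqtm) (@tfst G A B).
Proof. intros ? ? ?; apply cg_fst; auto. Qed.
#[export] Instance tsnd_Proper G A B : Proper (eqtm ==> eqtm) (@tsnd G A B).
Proof. intros ? ? ?; apply cg_snd; auto. Qed.
#[export] Instance tlam_Proper G A B : Proper (eqtm ==> eqtm) (@tlam G A B).
Proof. intros ? ? ?; apply cg_lam; auto. Qed.
#[export] Instance tapp_Proper G A B : Proper (eqtm ==> eqtm ==> eqtm) (@tapp G A B).
Proof. intros ? ? ? ? ? ?; apply cg_app; auto. Qed.
#[export] Instance tletmap_Proper G A B : Proper (eqtm ==> eqtm ==> eqtm) (@tletmap G A B).
Proof. intros ? ? ? ? ? ?; apply cg_letmap; auto. Qed.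
#[export] Instance subst_Proper G D A (s : sub G D) : Proper (eqtm ==> eqtm) (@subst G D A s).
Proof. intros ? ? ?; apply eqtm_subst; auto. Qed.

Definition nosub {D} : sub nil D := fun A v =>
  match v in var L A0 return (match L with nil => tm D A0 | _ => unit end) with
  | Vz => tt | Vs _ => tt end.

Definition s1 {X Y D} (a : tm D X) (g : tm [X] Y) : tm D Y := subst (scons a nosub) g.

#[export] Instance s1_Proper X Y D : Proper (eqtm ==> eqtm ==> eqtm) (@s1 X Y D).
Proof.
  intros a a' Ha g g' Hg. unfold s1. rewrite Hg. apply eqtm_subst_pw.
  apply var_cons_rect; auto. intros A v; destruct (var_nil_empty _ v).
Qed.

Lemma sub1_eta X D (s : sub [X] D) : s = scons (s _ Vz) nosub.
Proof. fext. revert A v. apply var_cons_rect; auto. intros A v; destruct (var_nil_empty _ v). Qed.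

Lemma subst_s1 X Y D E (a : tm D X) (g : tm [X] Y) (s : sub D E) :
  subst s (s1 a g) = s1 (subst s a) g.
Proof. unfold s1. rewrite subst_subst. f_equal. rewrite (sub1_eta _ _ (fun _ _ => _)). reflexivity. Qed.

Lemma s1_s1 X Y Z D (a : tm D X) (f : tm [X] Y) (g : tm [Y] Z) :
  s1 a (s1 f g) = s1 (s1 a f) g.
Proof. apply subst_s1. Qed.

Lemma s1_var X Y (g : tm [X] Y) : s1 (tvar Vz) g = g.
Proof.
  unfold s1. rewrite <- (subst_ids _ _ g) at 2. f_equal.
  symmetry. apply (sub1_eta X [X] ids).
Qed.

Lemma wk_s1 X Y B (g : tm [X] Y) : wk (B := B) g = s1 (tvar (Vs Vz)) g.
Proof.
  unfold wk, s1. rewrite rename_as_subst. f_equal.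
  apply (sub1_eta X (B :: [X]) (fun A v => tvar (Vs v))).
Qed.

Definition cls {X Y} (t : tm [X] Y) : tm [X] Y -> Prop := fun s => eqtm t s.
Definition Hm (X Y : ty) := {P : tm [X] Y -> Prop | exists t, P = cls t}.
Definition mk {X Y} (t : tm [X] Y) : Hm X Y := exist _ (cls t) (ex_intro _ t eq_refl).
Definition rep {X Y} (h : Hm X Y) : tm [X] Y :=
  proj1_sig (constructive_indefinite_description _ (proj2_sig h)).

Lemma mk_eq X Y (t u : tm [X] Y) : eqtm t u -> mk t = mk u.
Proof.
  intro H. unfold mk.
  assert (E : cls t = cls u).
  { extensionality s. apply propositional_extensionality. unfold cls.
    split; intro; [rewrite <- H | rewrite H]; auto. }
  revert E. generalize (ex_intro (fun t0 => cls t = cls t0) t eq_refl).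
  generalize (ex_intro (fun t0 => cls u = cls t0) u eq_refl).
  intros e1 e2 E. revert e2. rewrite E. intro e2. f_equal. apply proof_irrelevance.
Qed.

Lemma mk_inj X Y (t u : tm [X] Y) : mk t = mk u -> eqtm t u.
Proof.
  intro H. assert (E : cls t = cls u) by (apply (f_equal (@proj1_sig _ _)) in H; exact H).
  assert (cls u u) by (unfold cls; reflexivity). rewrite <- E in H0. exact H0.
Qed.

Lemma mk_rep X Y (h : Hm X Y) : mk (rep h) = h.
Proof.
  unfold rep. destruct (constructive_indefinite_description _ _) as [t Ht]. simpl.
  destruct h as [P HP]. simpl in Ht. subst P. unfold mk. f_equal. apply proof_irrelevance.
Qed.

Lemma rep_mk X Y (t : tm [X] Y) : eqtm (rep (mk t)) t.
Proof. apply mk_inj. rewrite mk_rep. reflexivity. Qed.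

Lemma hom_cases X Y (h : Hm X Y) : exists t, h = mk t.
Proof. exists (rep h). symmetry; apply mk_rep. Qed.

Definition L1 {X Y X' Y'} (F : tm [X] Y -> tm [X'] Y') (h : Hm X Y) : Hm X' Y' := mk (F (rep h)).
Definition L2 {X Y X1 Y1 X' Y'} (F : tm [X] Y -> tm [X1] Y1 -> tm [X'] Y')
  (h : Hm X Y) (k : Hm X1 Y1) : Hm X' Y' := mk (F (rep h) (rep k)).

Lemma L1_mk X Y X' Y' (F : tm [X] Y -> tm [X'] Y') (PF : Proper (eqtm ==> eqtm) F) t :
  L1 F (mk t) = mk (F t).
Proof. unfold L1. apply mk_eq. rewrite rep_mk. reflexivity. Qed.
Lemma L2_mk X Y X1 Y1 X' Y' (F : tm [X] Y -> tm [X1] Y1 -> tm [X'] Y')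
  (PF : Proper (eqtm ==> eqtm ==> eqtm) F) t u :
  L2 F (mk t) (mk u) = mk (F t u).
Proof. unfold L2. apply mk_eq. rewrite !rep_mk. reflexivity. Qed.
Lemma s1_vz X D (a : tm D X) : s1 a (tvar Vz) = a. Proof. reflexivity. Qed.
Lemma s1_unit X D (a : tm D X) : s1 a tunit = tunit. Proof. reflexivity. Qed.
Lemma s1_pair X A B D (a : tm D X) (t : tm [X] A) (u : tm [X] B) :
  s1 a (tpair t u) = tpair (s1 a t) (s1 a u). Proof. reflexivity. Qed.
Lemma s1_fst X A B D (a : tm D X) (t : tm [X] (Prod A B)) : s1 a (tfst t) = tfst (s1 a t).
Proof. reflexivity. Qed.
Lemma s1_snd X A B D (a : tm D X) (t : tm [X] (Prod A B)) : s1 a (tsnd t) = tsnd (s1 a t).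
Proof. reflexivity. Qed.
Lemma s1_app X A B D (a : tm D X) (t : tm [X] (Arr A B)) u : s1 a (tapp t u) = tapp (s1 a t) (s1 a u).
Proof. reflexivity. Qed.

Lemma subst1_wk G A B (t : tm G B) (b : tm G A) : subst (scons b ids) (wk t) = t.
Proof. unfold wk. rewrite rename_subst. apply subst_ids. Qed.

Definition tcomp {X Y Z} (g : Hm Y Z) (f : Hm X Y) : Hm X Z := L2 (fun g f => s1 f g) g f.
Lemma tcomp_P X Y Z : Proper (eqtm ==> eqtm ==> eqtm) (fun (g : tm [Y] Z) (f : tm [X] Y) => s1 f g).
Proof. intros ? ? H ? ? H'. rewrite H, H'. reflexivity. Qed.
Lemma tcomp_mk X Y Z (g : tm [Y] Z) (f : tm [X] Y) : tcomp (mk g) (mk f) = mk (s1 f g).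
Proof. apply (L2_mk _ _ _ _ _ _ _ (tcomp_P X Y Z)). Qed.

Definition tpairing {Z X Y} (f : Hm Z X) (g : Hm Z Y) : Hm Z (Prod X Y) := L2 tpair f g.
Lemma tpairing_mk Z X Y (f : tm [Z] X) (g : tm [Z] Y) : tpairing (mk f) (mk g) = mk (tpair f g).
Proof. apply L2_mk. typeclasses eauto. Qed.

Definition curryF {Z X Y} (f : tm [Prod Z X] Y) : tm [Z] (Arr X Y) :=
  tlam (s1 (tpair (tvar (Vs Vz)) (tvar Vz)) f).
Definition tcurry {Z X Y} (f : Hm (Prod Z X) Y) : Hm Z (Arr X Y) := L1 curryF f.
Lemma tcurry_mk Z X Y (f : tm [Prod Z X] Y) : tcurry (mk f) = mk (curryF f).
Proof. apply L1_mk. intros ? ? H. unfold curryF. rewrite H. reflexivity. Qed.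

Definition tid X : Hm X X := mk (tvar Vz).
Definition tbang X : Hm X Unit := mk tunit.
Definition tpr1 X Y : Hm (Prod X Y) X := mk (tfst (tvar Vz)).
Definition tpr2 X Y : Hm (Prod X Y) Y := mk (tsnd (tvar Vz)).
Definition tev X Y : Hm (Prod (Arr X Y) X) Y := mk (tapp (tfst (tvar Vz)) (tsnd (tvar Vz))).

Ltac hc h := let t := fresh "t" in destruct (hom_cases _ _ h) as [t ->].

Definition TM : CCC.
Proof.
  refine {| obj := ty; hom := Hm; cid := tid; comp := @tcomp;
            one := Unit; bang := tbang; prod := Prod; pr1 := tpr1; pr2 := tpr2;
            pairing := @tpairing; exp := Arr; ev := tev; curry := @tcurry |}.
  - intros. hc f; hc g; hc h. rewrite !tcomp_mk. rewrite s1_s1. reflexivity.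
  - intros. hc f. unfold tid. rewrite tcomp_mk. reflexivity.
  - intros. hc f. unfold tid. rewrite tcomp_mk, s1_var. reflexivity.
  - intros. hc f. unfold tbang. apply mk_eq. apply ax_unit_eta.
  - intros. hc f; hc g. unfold tpr1. rewrite tpairing_mk, tcomp_mk. apply mk_eq.
    rewrite s1_fst, s1_vz. apply ax_fst_beta.
  - intros. hc f; hc g. unfold tpr2. rewrite tpairing_mk, tcomp_mk. apply mk_eq.
    rewrite s1_snd, s1_vz. apply ax_snd_beta.
  - intros. hc h. unfold tpr1, tpr2. rewrite !tcomp_mk, tpairing_mk. apply mk_eq.
    rewrite s1_fst, s1_snd, s1_vz. symmetry. apply ax_prod_eta.
  - intros. hc f. unfold tpr1, tpr2, tev. rewrite tcurry_mk, !tcomp_mk, tpairing_mk, tcomp_mk.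
    apply mk_eq. rewrite s1_app, s1_fst, s1_snd, s1_vz, ax_fst_beta, ax_snd_beta.
    unfold curryF. unfold s1 at 1. simpl. rewrite subst_s1. simpl.
    rewrite ax_fun_beta. unfold subst1. rewrite subst_s1. simpl.
    unfold ids. rewrite <- ax_prod_eta. rewrite s1_var. reflexivity.
  - intros. hc h. unfold tpr1, tpr2, tev. rewrite !tcomp_mk, tpairing_mk, tcomp_mk, tcurry_mk.
    apply mk_eq. unfold curryF.
    rewrite s1_app, s1_fst, s1_snd, s1_vz, ax_fst_beta, ax_snd_beta.
    rewrite s1_app, s1_snd, s1_s1, s1_fst, s1_vz, ax_fst_beta, ax_snd_beta.
    rewrite <- wk_s1. symmetry. apply ax_fun_eta.
Defined.
Lemma s1_letmap X A B D (a : tm D X) (t : tm [X] (Dia A)) (u : tm (A :: [X]) B) :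
  s1 a (tletmap t u) = tletmap (s1 a t) (subst (lift_sub (scons a nosub)) u).
Proof. reflexivity. Qed.

Definition DmapF {X Y} (f : tm [X] Y) : tm [Dia X] (Dia Y) :=
  tletmap (tvar Vz) (s1 (D := X :: [Dia X]) (tvar Vz) f).
Definition tDmap X Y (f : Hm X Y) : Hm (Dia X) (Dia Y) := L1 DmapF f.
Lemma tDmap_mk X Y (f : tm [X] Y) : tDmap X Y (mk f) = mk (DmapF f).
Proof. apply L1_mk. intros ? ? H. unfold DmapF. rewrite H. reflexivity. Qed.
Definition stF X Y : tm [Prod X (Dia Y)] (Dia (Prod X Y)) :=
  tletmap (tsnd (tvar Vz)) (tpair (tfst (tvar (Vs Vz))) (tvar Vz)).
Definition tst X Y : Hm (Prod X (Dia Y)) (Dia (Prod X Y)) := mk (stF X Y).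

Ltac tn := repeat progress (rewrite ?s1_vz, ?s1_fst, ?s1_snd, ?s1_pair, ?s1_app, ?s1_letmap,
   ?subst_s1, ?s1_s1, ?wk_s1, ?ax_fst_beta, ?ax_snd_beta; cbn [subst lift_sub scons]).

Ltac tsimp := repeat (first [ rewrite tcomp_mk | rewrite tpairing_mk | rewrite tDmap_mk
   | rewrite tcurry_mk ]).

Lemma TMpmap X X' Y Y' (f : tm [X] X') (g : tm [Y] Y') :
  @pmap TM X X' Y Y' (mk f) (mk g) = mk (tpair (s1 (tfst (tvar Vz)) f) (s1 (tsnd (tvar Vz)) g)).
Proof. unfold pmap. simpl. unfold tpr1, tpr2. tsimp. reflexivity. Qed.

Definition TMM : SModel TM.
Proof.
  refine (Build_SModel TM Dia tDmap _ _ tst _ _ _).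
  - intros. simpl. unfold tid. rewrite tDmap_mk. apply mk_eq. unfold DmapF.
    rewrite s1_vz. symmetry. apply ax_letmap_eta.
  - intros. simpl. hc f; hc g. tsimp. apply mk_eq. unfold DmapF.
    rewrite s1_letmap, s1_vz, subst_s1. simpl. rewrite ax_letmap_beta, subst_s1. simpl.
    rewrite s1_s1. reflexivity.
  - intros. hc f; hc g. rewrite (tDmap_mk Y Y'), !TMpmap. simpl. unfold tst. tsimp.
    apply mk_eq. unfold stF, DmapF. tn. rewrite !ax_letmap_beta. tn. reflexivity.
  - intros. simpl. unfold tst, tpr2. tsimp. apply mk_eq. unfold stF, DmapF. tn.
    rewrite !ax_letmap_beta. tn. symmetry. apply ax_letmap_eta.
  - intros. simpl. unfold tst, assoc, tid. simpl. unfold tpr1, tpr2, tst. tsimp.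
    apply mk_eq. unfold stF, DmapF. tn.
    rewrite !ax_letmap_beta. tn. reflexivity.
Defined.
Definition feq2 {A1 A2 B : Type} (f : A1 -> A2 -> B) {x1 y1 : A1} {x2 y2 : A2}
  (H1 : x1 = y1) (H2 : x2 = y2) : f x1 x2 = f y1 y2 :=
  match H1 in _ = y return f x1 x2 = f y y2 with
  | eq_refl => match H2 in _ = y return f x1 x2 = f x1 y with eq_refl => eq_refl end end.
Definition feq1 {A B : Type} (f : A -> B) {x y : A} (H : x = y) : f x = f y :=
  match H in _ = z return f x = f z with eq_refl => eq_refl end.

Fixpoint E (A : ty) : A = sem_ty TMM Base A :=
  match A return A = sem_ty TMM Base A with
  | Base => eq_refl
  | Unit => eq_refl
  | Prod A B => feq2 Prod (E A) (E B)
  | Arr A B => feq2 Arr (E A) (E B)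
  | Dia A => feq1 Dia (E A)
  end.

Definition cast {G X Y} (e : X = Y) (t : tm G X) : tm G Y :=
  match e in _ = Y0 return tm G Y0 with eq_refl => t end.

Lemma c_subst G D X Y (e : X = Y) (s : sub G D) t : subst s (cast e t) = cast e (subst s t).
Proof. destruct e; reflexivity. Qed.
Lemma c_s1 Z D X Y (e : X = Y) (a : tm D Z) t : s1 a (cast e t) = cast e (s1 a t).
Proof. destruct e; reflexivity. Qed.
#[export] Instance cast_Proper G X Y (e : X = Y) : Proper (eqtm ==> eqtm) (@cast G X Y e).
Proof. destruct e; intros ? ? H; exact H. Qed.
Lemma c_inv G X Y (e : X = Y) (t : tm G Y) : cast e (cast (Logic.eq_sym e) t) = t.
Proof. destruct e; reflexivity. Qed.
Lemma c_inv2 G X Y (e : X = Y) (t : tm G X) : cast (Logic.eq_sym e) (cast e t) = t.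
Proof. destruct e; reflexivity. Qed.
Lemma c_pair G A A' B B' (e1 : A = A') (e2 : B = B') (a : tm G A) (b : tm G B) :
  cast (feq2 Prod e1 e2) (tpair a b) = tpair (cast e1 a) (cast e2 b).
Proof. destruct e1, e2; cbv [feq2 feq1 cast]; reflexivity. Qed.
Lemma c_fst G A A' B B' (e1 : A = A') (e2 : B = B') (c : tm G (Prod A B)) :
  tfst (cast (feq2 Prod e1 e2) c) = cast e1 (tfst c).
Proof. destruct e1, e2; cbv [feq2 feq1 cast]; reflexivity. Qed.
Lemma c_snd G A A' B B' (e1 : A = A') (e2 : B = B') (c : tm G (Prod A B)) :
  tsnd (cast (feq2 Prod e1 e2) c) = cast e2 (tsnd c).
Proof. destruct e1, e2; cbv [feq2 feq1 cast]; reflexivity. Qed.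
Lemma c_app G A A' B B' (e1 : A = A') (e2 : B = B') (f : tm G (Arr A B)) a :
  tapp (cast (feq2 Arr e1 e2) f) (cast e1 a) = cast e2 (tapp f a).
Proof. destruct e1, e2; cbv [feq2 feq1 cast]; reflexivity. Qed.

Lemma subst_up_id G A B (b : tm (A :: G) B) :
  subst (scons (tvar Vz) (fun _ v => tvar (Vs v))) b = b.
Proof.
  rewrite <- (subst_ids _ _ b) at 2. f_equal. fext. revert A0 v.
  apply var_cons_rect; reflexivity.
Qed.

Lemma c_lam G A A' B B' (e1 : A = A') (e2 : B = B') (b : tm (A :: G) B) :
  cast (feq2 Arr e1 e2) (tlam b)
  = tlam (cast e2 (subst (scons (cast (Logic.eq_sym e1) (tvar Vz)) (fun _ v => tvar (Vs v))) b)).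
Proof. destruct e1, e2. simpl. rewrite subst_up_id. reflexivity. Qed.
Lemma c_letmap G A A' B B' (e1 : A = A') (e2 : B = B') (t : tm G (Dia A)) (u : tm (A :: G) B) :
  cast (feq1 Dia e2) (tletmap t u)
  = tletmap (cast (feq1 Dia e1) t)
      (cast e2 (subst (scons (cast (Logic.eq_sym e1) (tvar Vz)) (fun _ v => tvar (Vs v))) u)).
Proof. destruct e1, e2. simpl. rewrite subst_up_id. reflexivity. Qed.

Fixpoint sig (G : ctx) : sub G [sem_ctx TMM Base G] :=
  match G return sub G [sem_ctx TMM Base G] with
  | nil => nosub
  | A :: G' => scons (cast (Logic.eq_sym (E A)) (tsnd (tvar Vz)))
                 (fun _ v => s1 (tfst (tvar Vz)) (sig G' _ v))
  end.

Lemma sem_var_TM G A (v : var G A) :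
  sem_var TMM Base v = mk (cast (E A) (sig G _ v)).
Proof.
  induction v; simpl.
  - rewrite c_inv. reflexivity.
  - rewrite IHv. unfold tpr1. rewrite tcomp_mk, c_s1. reflexivity.
Qed.

Lemma sig_lift G A B (t : tm (A :: G) B) :
  eqtm (s1 (tpair (tvar (Vs Vz)) (tvar Vz)) (subst (sig (A :: G)) t))
       (subst (scons (cast (Logic.eq_sym (E A)) (tvar Vz)) (fun _ v => tvar (Vs v)))
          (subst (lift_sub (sig G)) t)).
Proof.
  unfold s1. rewrite !subst_subst. apply eqtm_subst_pw. apply var_cons_rect.
  - cbn [sig scons subst]. rewrite c_subst. cbn. rewrite ax_snd_beta. reflexivity.
  - intros A0 v. cbn [sig scons subst lift_sub].
    rewrite wk_s1, !subst_s1. cbn. rewrite ax_fst_beta. reflexivity.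
Qed.
Lemma sem_TM G A (t : tm G A) : sem TMM Base t = mk (cast (E A) (subst (sig G) t)).
Proof.
  induction t; simpl.
  - apply sem_var_TM.
  - reflexivity.
  - rewrite IHt1, IHt2. rewrite tpairing_mk. rewrite c_pair. reflexivity.
  - rewrite IHt. unfold tpr1. rewrite tcomp_mk. apply mk_eq. rewrite s1_fst, s1_vz.
    cbn [E]. rewrite c_fst. reflexivity.
  - rewrite IHt. unfold tpr2. rewrite tcomp_mk. apply mk_eq. rewrite s1_snd, s1_vz.
    cbn [E]. rewrite c_snd. reflexivity.
  - rewrite IHt, tcurry_mk. apply mk_eq. cbn [E]. rewrite c_lam. unfold curryF.
    rewrite c_s1. apply cg_lam. apply cast_Proper. apply sig_lift.
  - rewrite IHt1, IHt2, tpairing_mk. unfold tev. rewrite tcomp_mk. apply mk_eq.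
    rewrite s1_app, s1_fst, s1_snd, s1_vz, ax_fst_beta, ax_snd_beta.
    cbn [E]. rewrite c_app. reflexivity.
  - rewrite IHt1, IHt2. unfold tst, tid. rewrite tpairing_mk, tDmap_mk, !tcomp_mk.
    apply mk_eq. cbn [E]. rewrite (c_letmap _ _ _ _ _ (E A) (E B)).
    unfold stF, DmapF. tn. rewrite ax_letmap_beta. tn.
    apply cg_letmap; [reflexivity|]. rewrite c_s1. apply cast_Proper. apply sig_lift.
Qed.

Fixpoint tup (G : ctx) : tm G (sem_ctx TMM Base G) :=
  match G return tm G (sem_ctx TMM Base G) with
  | nil => tunit
  | A :: G' => tpair (wk (tup G')) (cast (E A) (tvar Vz))
  end.

Lemma wk_s1' X Y G B (a : tm G X) (g : tm [X] Y) : wk (B := B) (s1 a g) = s1 (wk a) g.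
Proof. unfold wk. rewrite !rename_as_subst. apply subst_s1. Qed.

#[export] Instance wk_Proper G A B : Proper (eqtm ==> eqtm) (@wk G A B).
Proof. intros ? ? H. unfold wk. apply eqtm_rename; auto. Qed.

Lemma tup_sig G A (v : var G A) : eqtm (s1 (tup G) (sig G A v)) (tvar v).
Proof.
  induction v; cbn [sig scons tup].
  - rewrite c_s1, s1_snd, s1_vz, ax_snd_beta, c_inv2. reflexivity.
  - rewrite s1_s1, s1_fst, s1_vz, ax_fst_beta, <- wk_s1', IHv. reflexivity.
Qed.

Lemma completeness G A (t u : tm G A) :
  sem TMM Base t = sem TMM Base u -> eqtm t u.
Proof.
  rewrite !sem_TM. intro H. apply mk_inj in H.
  apply (cast_Proper _ _ _ (Logic.eq_sym (E A))) in H. rewrite !c_inv2 in H.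
  pose proof (eqtm_subst _ _ _ _ H _ (scons (tup G) nosub)) as H1. clear H. rename H1 into H.
  rewrite !subst_subst in H.
  assert (K : forall s : tm G A, eqtm (subst (fun A v => subst (scons (tup G) nosub) (sig G A v)) s) s).
  { intro s. rewrite <- (subst_ids _ _ s) at 2. apply eqtm_subst_pw. intros. apply tup_sig. }
  rewrite <- (K t), <- (K u). exact H.
Qed.

Theorem proposition3p1 :
  forall (G : ctx) (A : ty) (t u : tm G A),
    eqtm t u <->
    (forall (C : CCC) (M : SModel C) (b : obj C), sem M b t = sem M b u).
Proof.
  intros G A t u. split.
  - intros H C M b. apply soundness; exact H.
  - intros H. apply completeness. apply H.
Qed.
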